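(* Let $X$ be a random variable, $Z$ a random variable jointly distributed with $X$, and $f,g$ real functions with $\mathbb{E}[f(X)^2],\mathbb{E}[g(X)^2]<\infty$. Then $$\operatorname{Var}\mathbb{E}[f(X)\mid Z]-\operatorname{Var}\mathbb{E}[g(X)\mid Z]\ge\frac12\Big\{\operatorname{Var}[f(X)]-\operatorname{Var}[g(X)]-\sqrt{(\operatorname{Var}[f(X)]+\operatorname{Var}[g(X)])^2-4\operatorname{Cov}(f(X),g(X))^2}\Big\}$$ and $$\operatorname{Var}\mathbb{E}[f(X)\mid Z]-\operatorname{Var}\mathbb{E}[g(X)\mid Z]\le\frac12\Big\{\operatorname{Var}[f(X)]-\operatorname{Var}[g(X)]+\sqrt{(\operatorname{Var}[f(X)]+\operatorname{Var}[g(X)])^2-4\operatorname{Cov}(f(X),g(X))^2}\Big\}.$$ *)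

(* Defs.v *)
From HB Require Import structures.
From mathcomp Require Import all_boot all_order all_algebra.
From mathcomp Require Import all_classical all_reals all_analysis.
Set Implicit Arguments. Unset Strict Implicit. Unset Printing Implicit Defensive.
Import Order.TTheory GRing.Theory Num.Theory.
Local Open Scope classical_set_scope.
Local Open Scope ring_scope.

Section Defs.
Context {d : measure_display} {T : measurableType d} {R : realType}.
Variable P : probability T R.

Definition mean (Y : T -> R) : R := Rintegral P setT Y.

Definition var (Y : T -> R) : R :=
  Rintegral P setT (fun x => (Y x - mean Y) ^+ 2).
Definition cov (Y1 Y2 : T -> R) : R :=
  Rintegral P setT (fun x => (Y1 x - mean Y1) * (Y2 x - mean Y2)).

Definition sigma_measurable {dZ : measure_display} {TZ : measurableType dZ}
  (Z : T -> TZ) (W : T -> R) : Prop :=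
  forall B : set R, measurable B ->
    exists C : set TZ, measurable C /\ W @^-1` B = Z @^-1` C.

(* W is a version of the conditional expectation E[Y | Z]
   (Kolmogorov's definition). *)
Definition is_cond_exp {dZ : measure_display} {TZ : measurableType dZ}
  (Z : T -> TZ) (Y W : T -> R) : Prop :=
  [/\ sigma_measurable Z W,
      P.-integrable setT (fun x => (W x)%:E) &
      forall C : set TZ, measurable C ->
        (\int[P]_(x in Z @^-1` C) (W x)%:E =
         \int[P]_(x in Z @^-1` C) (Y x)%:E)%E].
End Defs.

(* Main.v *)
Require Import Defs.
From HB Require Import structures.
From mathcomp Require Import all_boot all_order all_algebra.
From mathcomp Require Import all_classical all_reals all_analysis.
From mathcomp Require Import measurable_realfun ring lra.
Import Order.TTheory GRing.Theory Num.Theory.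
Local Open Scope classical_set_scope.
Local Open Scope ring_scope.

Lemma tr_props (R : realType) (N w : R) : 0 <= N ->
  let t := Num.max (- N) (Num.min w N) in
  [/\ t * t <= t * w, `|t| <= N & t ^+ 2 = Num.min (w ^+ 2) (N ^+ 2)].
Proof.
move=> N0 t; rewrite /t; clear t.
rewrite !minEle maxEle.
case: (lerP w N) => h1; case: (lerP (w ^+ 2) (N ^+ 2)) => h2.
- case: (lerP (- N) w) => h3.
  + by split => //; rewrite ler_norml; lra.
  + exfalso; nra.
- case: (lerP (- N) w) => h3.
  + exfalso; nra.
  + split; [nra| rewrite ler_norml; lra| by rewrite sqrrN].
- exfalso; nra.
- case: (lerP (- N) N) => h3.
  + split; [nra|rewrite ger0_norm //|by []].
  + exfalso; lra.
Qed.

Lemma final_ineq (R : rcfType) (p pp q qq c : R) : 0 <= p -> 0 <= pp -> 0 <= q -> 0 <= qq ->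
  (forall t, 0 <= t ^+ 2 * (p + qq) - 2 * t * c + (q + pp)) ->
  let vf := p + pp in let vg := q + qq in
  (vf - vg - Num.sqrt ((vf + vg) ^+ 2 - 4 * c ^+ 2)) / 2 <= p - q /\
  p - q <= (vf - vg + Num.sqrt ((vf + vg) ^+ 2 - 4 * c ^+ 2)) / 2.
Proof.
move=> hp hpp hq hqq H vf vg; rewrite /vf /vg.
have H0 := H 0; have CS : c ^+ 2 <= (p + qq) * (q + pp).
  have [u0|u0] := ltrP 0 (p + qq).
    have := H (c / (p + qq)).
    have E : (c / (p + qq)) ^+ 2 * (p + qq) - 2 * (c / (p + qq)) * c + (q + pp)
      = (q + pp) - c ^+ 2 / (p + qq) by field; rewrite lt0r_neq0.
    rewrite E subr_ge0 ler_pdivrMr //; lra.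
  have [->|cn0] := eqVneq c 0; first by rewrite expr0n /=; nra.
  have := H ((q + pp + 1) / (2 * c)).
  have E : ((q + pp + 1) / (2 * c)) ^+ 2 * (p + qq) - 2 * ((q + pp + 1) / (2 * c)) * c + (q + pp)
     = ((q + pp + 1) / (2 * c)) ^+ 2 * (p + qq) - 1 by field.
  rewrite E; have := mulr_ge0_le0 (sqr_ge0 ((q + pp + 1) / (2 * c))) u0; lra.
set D := ((p + pp + (q + qq)) ^+ 2 - 4 * c ^+ 2); have D0 : 0 <= D by rewrite /D; have := sqr_ge0 (p + qq - (q + pp)); nra.
have s0 := sqrtr_ge0 D; have s2 := sqr_sqrtr D0.
set s := Num.sqrt D in s0 s2 *.
have : (p - pp - q + qq) ^+ 2 <= s ^+ 2 by rewrite s2 /D; nra.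
move=> h; split; nra.
Qed.

Section key.
Context d (T : measurableType d) (R : realType) (P : probability T R).
Context dZ (TZ : measurableType dZ) (Z : T -> TZ) (mZ : measurable_fun setT Z).
Local Notation Tg := (g_sigma_algebra_preimageType Z).

Lemma Tg_meas (A : set Tg) : measurable A -> measurable (A : set T).
Proof. by case=> B mB <-; exact: mZ. Qed.

Lemma Tg_measfun (h : Tg -> R) : measurable_fun setT h -> measurable_fun (setT : set T) h.
Proof. by move=> mh _ B mB; apply: Tg_meas; exact: mh. Qed.

Import HBNNSimple.

Lemma key_simple (h : {nnsfun Tg >-> R}) (F1 F2 : T -> R)
  (mF1 : measurable_fun setT F1) (mF2 : measurable_fun setT F2)
  (F10 : forall x, 0 <= F1 x) (F20 : forall x, 0 <= F2 x)
  (HF : forall A : set Tg, measurable A ->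
     (\int[P]_(x in (A : set T)) (F1 x)%:E = \int[P]_(x in (A : set T)) (F2 x)%:E)%E) :
  (\int[P]_x (h x * F1 x)%:E = \int[P]_x (h x * F2 x)%:E)%E.
Proof.
have mh : measurable_fun (setT : set T) (h : T -> R).
  by apply: Tg_measfun; exact: measurable_funP.
have E (F : T -> R) : measurable_fun setT F -> (forall x, 0 <= F x) ->
  (\int[P]_x (h x * F x)%:E = \sum_(y \in range h) (y%:E * \int[P]_(x in ((h @^-1` [set y]) : set T)) (F x)%:E))%E.
  move=> mF F0.
  have mA y : measurable ((h @^-1` [set y]) : set T).
    by rewrite -[X in measurable X]setTI; apply: mh.
  have -> : (fun x => (h x * F x)%:E) =
     (fun x => \sum_(y \in range h) ((y * \1_(h @^-1` [set y]) x * F x)%:E))%E.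
    apply/funext => x; rewrite fsumEFin //; congr EFin.
    by rewrite {1}fimfunE mulr_fsuml.
  rewrite ge0_integral_fsum //; last first.
    move=> y x _; rewrite lee_fin; apply: mulr_ge0 => //.
    rewrite indicE; case: (boolP (x \in _)) => [/set_mem /= <-|_]; last by rewrite mulr0.
    by rewrite mulr1; exact: fun_ge0.
  - move=> y; apply/measurable_EFinP; apply: measurable_funM => //.
    apply: measurable_funM => //; exact: measurable_indic.
  apply: eq_fsbigr => y /set_mem [z _ <-].
  rewrite [in RHS]integral_mkcond [in RHS]epatch_indic -ge0_integralZl //; last 3 first.
  - apply: emeasurable_funM; first exact/measurable_EFinP.
    by apply/measurable_EFinP; apply: measurable_indic; exact: mA.
  - by move=> x _; apply: mule_ge0; rewrite lee_fin //; apply: indic_ge0.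
  - by rewrite lee_fin; exact: fun_ge0.
  apply: eq_integral => x _ /=; rewrite -!EFinM; congr EFin.
  by rewrite mulrAC mulrA.
by rewrite E // E //; apply: eq_fsbigr => y _; rewrite HF //; exact: measurable_sfunP.
Qed.

Lemma key_nonneg (h : T -> R) (mh : measurable_fun (setT : set Tg) h)
  (h0 : forall x, 0 <= h x) (F1 F2 : T -> R)
  (mF1 : measurable_fun setT F1) (mF2 : measurable_fun setT F2)
  (F10 : forall x, 0 <= F1 x) (F20 : forall x, 0 <= F2 x)
  (HF : forall A : set Tg, measurable A ->
     (\int[P]_(x in (A : set T)) (F1 x)%:E = \int[P]_(x in (A : set T)) (F2 x)%:E)%E) :
  (\int[P]_x (h x * F1 x)%:E = \int[P]_x (h x * F2 x)%:E)%E.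
Proof.
have mh' : measurable_fun (setT : set Tg) (EFin \o h) by exact/measurable_EFinP.
pose hn := nnsfun_approx measurableT mh'.
have L (F : T -> R) : measurable_fun setT F -> (forall x, 0 <= F x) ->
    (\int[P]_x (h x * F x)%:E = limn (fun n => \int[P]_x (hn n x * F x)%:E))%E.
  move=> mF F0.
  transitivity (\int[P]_x limn (fun n => (hn n x * F x)%:E))%E.
    apply: eq_integral => x _; apply/esym/cvg_lim => //.
    under eq_fun do rewrite EFinM.
    rewrite EFinM; apply: cvgeZr => //.
    by apply: cvg_nnsfun_approx => // y _; rewrite lee_fin.
  apply: monotone_convergence => //.
  - move=> n; apply/measurable_EFinP; apply: measurable_funM => //.
    apply: Tg_measfun; exact: measurable_funP.
  - by move=> n x _; rewrite lee_fin; apply: mulr_ge0 => //; exact: fun_ge0.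
  - move=> x _ m n mn; rewrite lee_fin; apply: ler_wpM2r => //.
    by have := nd_nnsfun_approx (@measurableT _ Tg) mh' mn => /lefP; apply.
rewrite (L F1) // (L F2) //.
suff E : (fun n => \int[P]_x (hn n x * F1 x)%:E)%E = (fun n => \int[P]_x (hn n x * F2 x)%:E)%E.
  by rewrite E.
by apply/funext => n; exact: key_simple.
Qed.

Lemma int_le (f g : T -> R) : measurable_fun setT f -> (forall x, `|f x| <= `|g x|) ->
  P.-integrable setT (EFin \o g) -> P.-integrable setT (EFin \o f).
Proof.
move=> mf fg; apply: le_integrable => //; first exact/measurable_EFinP.
by move=> x _ /=; rewrite lee_fin.
Qed.

Lemma key_pos (Y W h : T -> R)
  (iY : P.-integrable setT (EFin \o Y)) (iW : P.-integrable setT (EFin \o W))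
  (HYW : forall A : set Tg, measurable A ->
     (\int[P]_(x in (A : set T)) (W x)%:E = \int[P]_(x in (A : set T)) (Y x)%:E)%E)
  (mh : measurable_fun (setT : set Tg) h) (h0 : forall x, 0 <= h x)
  (ihY : P.-integrable setT (EFin \o (fun x => h x * Y x)))
  (ihW : P.-integrable setT (EFin \o (fun x => h x * W x))) :
  Rintegral P setT (fun x => h x * Y x) = Rintegral P setT (fun x => h x * W x).
Proof.
have mY : measurable_fun setT Y by apply/measurable_EFinP; exact: measurable_int iY.
have mW : measurable_fun setT W by apply/measurable_EFinP; exact: measurable_int iW.
pose c x := `|Y x| + `|W x|.
have mc : measurable_fun setT c by apply: measurable_funD; exact: measurableT_comp.
have ic : P.-integrable setT (EFin \o c).
  apply: (@integrableD _ _ _ P setT measurableT (EFin \o (fun x => `|Y x|)) (EFin \o (fun x => `|W x|))).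
  - exact: integrable_norm.
  - exact: integrable_norm.
have ihc : P.-integrable setT (EFin \o (fun x => h x * c x)).
  apply: (eq_integrable _ (fun x => (`|h x * Y x| + `|h x * W x|)%:E)) => //.
    by move=> x _ /=; rewrite !normrM (ger0_norm (h0 x)) mulrDr.
  apply: (@integrableD _ _ _ P setT measurableT (EFin \o (fun x => `|h x * Y x|)) (EFin \o (fun x => `|h x * W x|))).
  - exact: integrable_norm.
  - exact: integrable_norm.
have cge x : 0 <= Y x + c x /\ 0 <= W x + c x.
  rewrite /c; have := ler_norm (- Y x); have := ler_norm (- W x); rewrite !normrN.
  have := normr_ge0 (Y x); have := normr_ge0 (W x); lra.
have HF : forall A : set Tg, measurable A ->
     (\int[P]_(x in (A : set T)) (Y x + c x)%:E = \int[P]_(x in (A : set T)) (W x + c x)%:E)%E.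
  move=> A mA; have mA' := @Tg_meas A mA.
  have iA (k : T -> R) : P.-integrable setT (EFin \o k) -> P.-integrable (A : set T) (EFin \o k).
    by move=> ik; apply: integrableS ik.
  rewrite (_ : (fun x => (Y x + c x)%:E) = (fun x => (Y x)%:E + (c x)%:E)%E) //.
  rewrite (_ : (fun x => (W x + c x)%:E) = (fun x => (W x)%:E + (c x)%:E)%E) //.
  by rewrite integralD //; [rewrite integralD // ?HYW //| |]; apply: iA.
have K := @key_nonneg h mh h0 (fun x => Y x + c x) (fun x => W x + c x)
  (measurable_funD mY mc) (measurable_funD mW mc) (fun x => (cge x).1) (fun x => (cge x).2) HF.
have K' : Rintegral P setT (fun x => h x * Y x + h x * c x) = Rintegral P setT (fun x => h x * W x + h x * c x).
  rewrite /Rintegral (_ : (fun x => (h x * Y x + h x * c x)%:E) = (fun x => (h x * (Y x + c x))%:E)); last first.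
    by apply/funext => x; congr EFin; ring.
  rewrite (_ : (fun x => (h x * W x + h x * c x)%:E) = (fun x => (h x * (W x + c x))%:E)); last first.
    by apply/funext => x; congr EFin; ring.
  by rewrite K.
move: K'; rewrite !RintegralD //; lra.
Qed.

Lemma key_real (Y W h : T -> R)
  (iY : P.-integrable setT (EFin \o Y)) (iW : P.-integrable setT (EFin \o W))
  (HYW : forall A : set Tg, measurable A ->
     (\int[P]_(x in (A : set T)) (W x)%:E = \int[P]_(x in (A : set T)) (Y x)%:E)%E)
  (mh : measurable_fun (setT : set Tg) h)
  (ihY : P.-integrable setT (EFin \o (fun x => h x * Y x)))
  (ihW : P.-integrable setT (EFin \o (fun x => h x * W x))) :
  Rintegral P setT (fun x => h x * Y x) = Rintegral P setT (fun x => h x * W x).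
Proof.
have mY : measurable_fun setT Y by apply/measurable_EFinP; exact: measurable_int iY.
have mW : measurable_fun setT W by apply/measurable_EFinP; exact: measurable_int iW.
have mhT : measurable_fun (setT : set T) h by exact: Tg_measfun.
have ma : measurable_fun (setT : set Tg) (fun x => `|h x|) by exact: measurableT_comp.
have mb : measurable_fun (setT : set Tg) (fun x => h x + `|h x|) by exact: measurable_funD.
have iaY : P.-integrable setT (EFin \o (fun x => `|h x| * Y x)).
  apply: int_le ihY; first by apply: measurable_funM => //; exact: measurableT_comp.
  by move=> x; rewrite !normrM normr_id.
have iaW : P.-integrable setT (EFin \o (fun x => `|h x| * W x)).
  apply: int_le ihW; first by apply: measurable_funM => //; exact: measurableT_comp.
  by move=> x; rewrite !normrM normr_id.
have ibY : P.-integrable setT (EFin \o (fun x => (h x + `|h x|) * Y x)).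
  apply: (eq_integrable _ ((EFin \o (fun x => h x * Y x)) \+ (EFin \o (fun x => `|h x| * Y x)))) => //.
    by move=> x _ /=; rewrite mulrDl.
  exact: integrableD.
have ibW : P.-integrable setT (EFin \o (fun x => (h x + `|h x|) * W x)).
  apply: (eq_integrable _ ((EFin \o (fun x => h x * W x)) \+ (EFin \o (fun x => `|h x| * W x)))) => //.
    by move=> x _ /=; rewrite mulrDl.
  exact: integrableD.
have Ka := @key_pos Y W (fun x => `|h x|) iY iW HYW ma (fun x => normr_ge0 (h x)) iaY iaW.
have hb x : 0 <= h x + `|h x| by have := ler_norm (- h x); rewrite normrN; lra.
have Kb := @key_pos Y W (fun x => h x + `|h x|) iY iW HYW mb hb ibY ibW.
have EY : Rintegral P setT (fun x => h x * Y x) =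
  Rintegral P setT (fun x => (h x + `|h x|) * Y x - `|h x| * Y x).
  by apply: eq_Rintegral => x _; ring.
have EW : Rintegral P setT (fun x => h x * W x) =
  Rintegral P setT (fun x => (h x + `|h x|) * W x - `|h x| * W x).
  by apply: eq_Rintegral => x _; ring.
by rewrite EY EW !RintegralB // Ka Kb.
Qed.

Lemma intD {f g : T -> R} : P.-integrable setT (EFin \o f) -> P.-integrable setT (EFin \o g) ->
  P.-integrable setT (EFin \o (fun x => f x + g x)).
Proof.
move=> iF iG; apply: (eq_integrable _ ((EFin \o f) \+ (EFin \o g))) => //.
exact: integrableD.
Qed.

Lemma intB {f g : T -> R} : P.-integrable setT (EFin \o f) -> P.-integrable setT (EFin \o g) ->
  P.-integrable setT (EFin \o (fun x => f x - g x)).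
Proof.
move=> iF iG; apply: (eq_integrable _ ((EFin \o f) \- (EFin \o g))%E) => //.
exact: integrableB.
Qed.

Lemma int_scale {Y : T -> R} (k : R) : P.-integrable setT (EFin \o Y) ->
  P.-integrable setT (EFin \o (fun x => k * Y x)).
Proof.
move=> iY; apply: (eq_integrable _ (fun x => k%:E * (EFin \o Y) x)%E) => //.
exact: integrableZl.
Qed.

Lemma W_L2 {Y W : T -> R}
  (iY : P.-integrable setT (EFin \o Y)) (iW : P.-integrable setT (EFin \o W))
  (iY2 : P.-integrable setT (EFin \o (fun x => Y x ^+ 2)))
  (mWg : measurable_fun (setT : set Tg) W)
  (HYW : forall A : set Tg, measurable A ->
     (\int[P]_(x in (A : set T)) (W x)%:E = \int[P]_(x in (A : set T)) (Y x)%:E)%E) :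
  P.-integrable setT (EFin \o (fun x => W x ^+ 2)).
Proof.
have mY : measurable_fun setT Y by apply/measurable_EFinP; exact: measurable_int iY.
have mW : measurable_fun setT W by apply/measurable_EFinP; exact: measurable_int iW.
pose tr (n : nat) x := Num.max (- n%:R) (Num.min (W x) n%:R).
have mtr n : measurable_fun (setT : set Tg) (tr n).
  exact: measurable_maxr (measurable_cst _) (measurable_minr mWg (measurable_cst _)).
have mtrT n : measurable_fun (setT : set T) (tr n) by exact: Tg_measfun.
have trP n x := @tr_props R n%:R (W x) (ler0n _ _).
have i2 n : P.-integrable setT (EFin \o (fun x => tr n x ^+ 2)).
  apply: (@int_le _ (cst (n%:R ^+ 2))).
  - by apply: measurable_funX.
  - move=> x; have [_ h _] := trP n x; rewrite /= !ger0_norm ?sqr_ge0 // -(real_normK (num_real (tr n x))).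
    have := normr_ge0 (tr n x); nra.
  - exact: finite_measure_integrable_cst.
have step n : Rintegral P setT (fun x => tr n x ^+ 2) <= Rintegral P setT (fun x => Y x ^+ 2).
  have ihY : P.-integrable setT (EFin \o (fun x => tr n x * Y x)).
    apply: (@int_le _ (fun x => n%:R * Y x)); first exact: measurable_funM.
      move=> x; have [_ h _] := trP n x; rewrite !normrM normr_nat.
      by apply: ler_wpM2r.
    exact: int_scale.
  have ihW : P.-integrable setT (EFin \o (fun x => tr n x * W x)).
    apply: (@int_le _ (fun x => n%:R * W x)); first exact: measurable_funM.
      move=> x; have [_ h _] := trP n x; rewrite !normrM normr_nat.
      by apply: ler_wpM2r.
    exact: int_scale.
  have K := @key_real Y W (tr n) iY iW HYW (mtr n) ihY ihW.
  have iS : P.-integrable setT (EFin \o (fun x => (tr n x ^+ 2 + Y x ^+ 2) * 2^-1)).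
    apply: (eq_integrable _ (fun x => ((2^-1)%:E * (EFin \o (fun x => (tr n x ^+ 2 + Y x ^+ 2)%R)) x)%E)) => //.
      by move=> x _ /=; rewrite mulrC.
    apply: integrableZl => //; exact: (intD (i2 n) iY2).
  have L1 : Rintegral P setT (fun x => tr n x ^+ 2) <= Rintegral P setT (fun x => tr n x * W x).
    apply: le_Rintegral => // x _; have [h _ _] := trP n x; by rewrite expr2.
  have L2 : Rintegral P setT (fun x => tr n x * Y x) <= Rintegral P setT (fun x => (tr n x ^+ 2 + Y x ^+ 2) * 2^-1).
    apply: le_Rintegral => // x _.
    have := sqr_ge0 (tr n x - Y x); lra.
  move: L2; rewrite RintegralZr //; last exact: (intD (i2 n) iY2).
  rewrite RintegralD // K; lra.
have stepE n : (\int[P]_x (tr n x ^+ 2)%:E <= (Rintegral P setT (fun x => Y x ^+ 2))%:E)%E.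
  by rewrite -(fineK (integrable_fin_num _ (i2 n))) // lee_fin; exact: step.
have nd x : nondecreasing_seq (fun n => (tr n x ^+ 2)%:E).
  move=> m k mk; rewrite lee_fin; have [_ _ ->] := trP m x; have [_ _ ->] := trP k x.
  have : (m%:R : R) <= k%:R by rewrite ler_nat.
  have := ler0n R m; rewrite !minEle; case: ifP; case: ifP => /=; nra.
have W2le : (\int[P]_x (W x ^+ 2)%:E <= (Rintegral P setT (fun x => Y x ^+ 2))%:E)%E.
  have -> : (\int[P]_x (W x ^+ 2)%:E = \int[P]_x limn (fun n => (tr n x ^+ 2)%:E))%E.
    apply: eq_integral => x _; apply/esym/cvg_lim => //; apply: cvg_near_cst.
    exists (Num.truncn `|W x|).+1 => // n /= hn.
    have [_ _ ->] := trP n x; congr EFin; rewrite minEle ifT //.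
    have h1 : `|W x| < n%:R.
      apply: (lt_le_trans (truncnS_gt _)); by rewrite ler_nat.
    rewrite -(real_normK (num_real (W x))); have := normr_ge0 (W x); nra.
  rewrite monotone_convergence //.
  - apply: lime_le.
      apply: ereal_nondecreasing_is_cvgn => m k mk; apply: ge0_le_integral => //.
      + by move=> x _; rewrite lee_fin sqr_ge0.
      + by apply/measurable_EFinP; apply: measurable_funX.
      + by apply/measurable_EFinP; apply: measurable_funX.
      + by move=> x _; exact: nd.
    by apply: nearW => n; exact: stepE.
  - by move=> n; apply/measurable_EFinP; apply: measurable_funX.
  - by move=> n x _; rewrite lee_fin sqr_ge0.
apply/integrableP; split; first by apply/measurable_EFinP; apply: measurable_funX.
rewrite (eq_integral (fun x => (W x ^+ 2)%:E)); last first.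
  by move=> x _ /=; rewrite ger0_norm // sqr_ge0.
exact: (le_lt_trans W2le (ltry _)).
Qed.

Definition L2 (F : T -> R) :=
  measurable_fun setT F /\ P.-integrable setT (EFin \o (fun x => F x ^+ 2)).

Lemma int_cst (k : R) : P.-integrable setT (EFin \o (fun _ : T => k)).
Proof. exact: finite_measure_integrable_cst. Qed.

Lemma L2_int {F} : L2 F -> P.-integrable setT (EFin \o F).
Proof.
case=> mF iF; apply: (@int_le _ (fun x => 1 + F x ^+ 2)) => //; last exact: intD (int_cst 1) iF.
move=> x; rewrite [X in _ <= X]ger0_norm; last by have := sqr_ge0 (F x); lra.
have := sqr_ge0 (`|F x| - 1); rewrite -(real_normK (num_real (F x))); nra.
Qed.

Lemma L2_mul {F G} : L2 F -> L2 G -> P.-integrable setT (EFin \o (fun x => F x * G x)).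
Proof.
case=> mF iF [mG iG]; apply: (@int_le _ (fun x => F x ^+ 2 + G x ^+ 2)); last exact: intD iF iG.
  exact: measurable_funM.
move=> x; rewrite normrM [X in _ <= X]ger0_norm; last by have := sqr_ge0 (F x); have := sqr_ge0 (G x); lra.
rewrite -(real_normK (num_real (F x))) -(real_normK (num_real (G x))).
have := sqr_ge0 (`|F x| - `|G x|); have := normr_ge0 (F x); have := normr_ge0 (G x); nra.
Qed.

Lemma L2_lin {F G} (a b : R) : L2 F -> L2 G -> L2 (fun x => a * F x + b * G x).
Proof.
move=> [mF iF] [mG iG]; split.
  by apply: measurable_funD; apply: measurable_funM.
apply: (@int_le _ (fun x => (2 * a ^+ 2) * F x ^+ 2 + (2 * b ^+ 2) * G x ^+ 2)).
- by apply: measurable_funX; apply: measurable_funD; apply: measurable_funM.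
- move=> x; rewrite ger0_norm ?sqr_ge0 // ger0_norm; last first.
    by have := sqr_ge0 a; have := sqr_ge0 b; have := sqr_ge0 (F x); have := sqr_ge0 (G x); nra.
  have := sqr_ge0 (a * F x - b * G x); nra.
- by apply: intD; apply: int_scale.
Qed.

Lemma L2_cst (k : R) : L2 (fun _ => k).
Proof. by split; [exact: measurable_cst | exact: int_cst]. Qed.

Definition ip (F G : T -> R) := Rintegral P setT (fun x => F x * G x).

Lemma ip_lin2 F G H K (a b c e : R) : L2 F -> L2 G -> L2 H -> L2 K ->
  Rintegral P setT (fun x => (a * F x + b * G x) * (c * H x + e * K x)) =
  a * c * ip F H + a * e * ip F K + b * c * ip G H + b * e * ip G K.
Proof.
move=> lF lG lH lK.
rewrite (@eq_Rintegral _ _ _ P setT (fun x => a * c * (F x * H x) + a * e * (F x * K x)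
   + b * c * (G x * H x) + b * e * (G x * K x))); last by move=> x _; ring.
have i1 := int_scale (a * c) (L2_mul lF lH).
have i2 := int_scale (a * e) (L2_mul lF lK).
have i3 := int_scale (b * c) (L2_mul lG lH).
have i4 := int_scale (b * e) (L2_mul lG lK).
rewrite RintegralD //; last by apply: intD => //; apply: intD.
rewrite RintegralD //; last by apply: intD.
rewrite RintegralD //.
rewrite !RintegralZl //; by [apply: L2_mul | apply: L2_mul].
Qed.

Lemma ipC F G : ip F G = ip G F.
Proof. by apply: eq_Rintegral => x _; rewrite mulrC. Qed.

Lemma ip_ge0 F : 0 <= ip F F.
Proof. by apply: Rintegral_ge0 => x _; rewrite -expr2 sqr_ge0. Qed.

Lemma orth {Y W h : T -> R} : L2 Y -> L2 W ->
  (forall A : set Tg, measurable A ->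
     (\int[P]_(x in (A : set T)) (W x)%:E = \int[P]_(x in (A : set T)) (Y x)%:E)%E) ->
  measurable_fun (setT : set Tg) h -> L2 h ->
  ip h (fun x => Y x - W x) = 0.
Proof.
move=> lY lW HYW mh lh.
rewrite /ip (@eq_Rintegral _ _ _ P setT (fun x => h x * Y x - h x * W x)); last by move=> x _; ring.
rewrite RintegralB //; try by apply: L2_mul.
rewrite (@key_real Y W h (L2_int lY) (L2_int lW) HYW mh (L2_mul lh lY) (L2_mul lh lW)).
by rewrite subrr.
Qed.

Lemma condexp_facts (Y W : T -> R) : is_cond_exp P Z Y W ->
  [/\ measurable_fun (setT : set Tg) W, P.-integrable setT (EFin \o W) &
  forall A : set Tg, measurable A ->
     (\int[P]_(x in (A : set T)) (W x)%:E = \int[P]_(x in (A : set T)) (Y x)%:E)%E].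
Proof.
case=> sW iW HW; split => //.
  move=> _ B mB; have [C [mC E]] := sW B mB.
  by exists C => //; rewrite E.
by move=> A [B mB <-]; rewrite setTI; exact: HW.
Qed.

Lemma main_sec (Y1 Y2 W1 W2 : T -> R) : L2 Y1 -> L2 Y2 ->
  is_cond_exp P Z Y1 W1 -> is_cond_exp P Z Y2 W2 ->
  let vf := var P Y1 in
  let vg := var P Y2 in
  let c := cov P Y1 Y2 in
  (vf - vg - Num.sqrt ((vf + vg) ^+ 2 - 4 * c ^+ 2)) / 2
    <= var P W1 - var P W2 /\
  var P W1 - var P W2
    <= (vf - vg + Num.sqrt ((vf + vg) ^+ 2 - 4 * c ^+ 2)) / 2.
Proof.
move=> l1 l2 /condexp_facts [mg1 i1 H1] /condexp_facts [mg2 i2 H2] vf vg c.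
have lW1 : L2 W1.
  split; first exact: Tg_measfun.
  exact: W_L2 (L2_int l1) i1 l1.2 mg1 H1.
have lW2 : L2 W2.
  split; first exact: Tg_measfun.
  exact: W_L2 (L2_int l2) i2 l2.2 mg2 H2.
set m1 := mean P Y1; set m2 := mean P Y2.
have one_meas : measurable_fun (setT : set Tg) (fun _ => 1 : R) by exact: measurable_cst.
have EW1 : mean P W1 = m1.
  have := orth l1 lW1 H1 one_meas (L2_cst 1).
  rewrite /ip (@eq_Rintegral _ _ _ P setT (fun x => Y1 x - W1 x)); last by move=> x _; ring.
  rewrite RintegralB //; try exact: L2_int. rewrite /m1 /mean; lra.
have EW2 : mean P W2 = m2.
  have := orth l2 lW2 H2 one_meas (L2_cst 1).
  rewrite /ip (@eq_Rintegral _ _ _ P setT (fun x => Y2 x - W2 x)); last by move=> x _; ring.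
  rewrite RintegralB //; try exact: L2_int. rewrite /m2 /mean; lra.
pose a x := 1 * W1 x + (- m1) * 1.
pose b x := 1 * W2 x + (- m2) * 1.
pose a' x := 1 * Y1 x + (- 1) * W1 x.
pose b' x := 1 * Y2 x + (- 1) * W2 x.
have la : L2 a by apply: L2_lin => //; exact: L2_cst.
have lb : L2 b by apply: L2_lin => //; exact: L2_cst.
have la' : L2 a' by apply: L2_lin.
have lb' : L2 b' by apply: L2_lin.
have ma : measurable_fun (setT : set Tg) a.
  by apply: measurable_funD; apply: measurable_funM => //; exact: measurable_cst.
have mb : measurable_fun (setT : set Tg) b.
  by apply: measurable_funD; apply: measurable_funM => //; exact: measurable_cst.
have O1 : ip a a' = 0.
  rewrite -(orth l1 lW1 H1 ma la); apply: eq_Rintegral => x _; rewrite /a'; ring.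
have O2 : ip b b' = 0.
  rewrite -(orth l2 lW2 H2 mb lb); apply: eq_Rintegral => x _; rewrite /b'; ring.
have O3 : ip a b' = 0.
  rewrite -(orth l2 lW2 H2 ma la); apply: eq_Rintegral => x _; rewrite /b'; ring.
have O4 : ip b a' = 0.
  rewrite -(orth l1 lW1 H1 mb lb); apply: eq_Rintegral => x _; rewrite /a'; ring.
have Evf : vf = ip a a + ip a' a'.
  rewrite /vf /var -/m1 (@eq_Rintegral _ _ _ P setT (fun x => (1 * a x + 1 * a' x) * (1 * a x + 1 * a' x))).
    by rewrite ip_lin2 // (ipC a' a) O1; ring.
  by move=> x _; rewrite /a /a'; ring.
have Evg : vg = ip b b + ip b' b'.
  rewrite /vg /var -/m2 (@eq_Rintegral _ _ _ P setT (fun x => (1 * b x + 1 * b' x) * (1 * b x + 1 * b' x))).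
    by rewrite ip_lin2 // (ipC b' b) O2; ring.
  by move=> x _; rewrite /b /b'; ring.
have Ec : c = ip a b + ip a' b'.
  rewrite /c /cov -/m1 -/m2 (@eq_Rintegral _ _ _ P setT (fun x => (1 * a x + 1 * a' x) * (1 * b x + 1 * b' x))).
    by rewrite ip_lin2 // O3 (ipC a' b) O4; ring.
  by move=> x _; rewrite /a /a' /b /b'; ring.
have EvW1 : var P W1 = ip a a.
  rewrite /var EW1; apply: eq_Rintegral => x _; rewrite /a; ring.
have EvW2 : var P W2 = ip b b.
  rewrite /var EW2; apply: eq_Rintegral => x _; rewrite /b; ring.
have CS : forall t, 0 <= t ^+ 2 * (ip a a + ip b' b') - 2 * t * (ip a b + ip a' b') + (ip b b + ip a' a').
  move=> t.
  have P1 : 0 <= Rintegral P setT (fun x => (t * a x + (-1) * b x) * (t * a x + (-1) * b x)).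
    by apply: Rintegral_ge0 => x _; rewrite -expr2 sqr_ge0.
  have P2 : 0 <= Rintegral P setT (fun x => (t * b' x + (-1) * a' x) * (t * b' x + (-1) * a' x)).
    by apply: Rintegral_ge0 => x _; rewrite -expr2 sqr_ge0.
  rewrite !ip_lin2 // in P1 P2.
  rewrite (ipC b a) in P1; rewrite (ipC b' a') in P2; rewrite expr2; nra.
have := @final_ineq _ _ _ _ _ _ (ip_ge0 a) (ip_ge0 a') (ip_ge0 b) (ip_ge0 b') CS.
by rewrite /= Evf Evg Ec EvW1 EvW2.
Qed.
End key.

Theorem lemma5 (d : measure_display) (T : measurableType d) (R : realType)
  (P : probability T R)
  (dX : measure_display) (TX : measurableType dX) (X : T -> TX)
  (dZ : measure_display) (TZ : measurableType dZ) (Z : T -> TZ)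
  (f g : TX -> R)
  (mX : measurable_fun setT X) (mZ : measurable_fun setT Z)
  (mf : measurable_fun setT f) (mg : measurable_fun setT g)
  (f2 : P.-integrable setT (fun x => ((f (X x)) ^+ 2)%:E))
  (g2 : P.-integrable setT (fun x => ((g (X x)) ^+ 2)%:E))
  (Wf Wg : T -> R)
  (hWf : is_cond_exp P Z (f \o X) Wf)
  (hWg : is_cond_exp P Z (g \o X) Wg) :
  let vf := var P (f \o X) in
  let vg := var P (g \o X) in
  let c := cov P (f \o X) (g \o X) in
  (vf - vg - Num.sqrt ((vf + vg) ^+ 2 - 4 * c ^+ 2)) / 2
    <= var P Wf - var P Wg /\
  var P Wf - var P Wg
    <= (vf - vg + Num.sqrt ((vf + vg) ^+ 2 - 4 * c ^+ 2)) / 2.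
Proof.
have l1 : @L2 _ _ _ P (f \o X) by split; [exact: measurableT_comp | exact: f2].
have l2 : @L2 _ _ _ P (g \o X) by split; [exact: measurableT_comp | exact: g2].
exact: (@main_sec _ _ _ P _ _ Z mZ _ _ _ _ l1 l2 hWf hWg).
Qed.
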